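(* Let $K$ be a field of characteristic $p>0$, $k=\bigcap_{n\ge0}K^{p^n}$, with $K/k$ finitely generated. Let $W_1$ be a subfield with $K^p\subset W_1\subset K$. Then there exists a subfield $W_2\subset W_1$ with $K^{p^2}\subset W_2$, $W_2\cdot K^p=W_1$ and $[W_1:W_2]=[K:W_1]$; i.e. $(K,W_1,W_2,W_2,W_2,\dots)$ is a power tower on $K$ with $[K:W_1]=[W_1:W_2]$.
   Context: $K^{p^n}=\{x^{p^n}:x\in K\}$; $A\cdot B$ is the composite of subfields. A power tower on $K$ is a sequence of subfields $W_0,W_1,\ldots$ with $W_j=W_i\cdot K^{p^j}$ for all $0\le j\le i$. *)

(* Defs.v *)
From HB Require Import structures.
From mathcomp Require Import all_boot all_order all_algebra.
Set Implicit Arguments. Unset Strict Implicit. Unset Printing Implicit Defensive.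
Import GRing.Theory.
Local Open Scope ring_scope.

Section Defs.
Variable K : fieldType.

Definition is_subfield (S : K -> Prop) : Prop :=
  [/\ S 0, S 1,
      (forall x y, S x -> S y -> S (x - y)),
      (forall x y, S x -> S y -> S (x * y)) &
      (forall x, S x -> x != 0 -> S x^-1)].

Definition subset_of (A B : K -> Prop) : Prop := forall x, A x -> B x.
Definition same_set (A B : K -> Prop) : Prop := forall x, A x <-> B x.

Definition powfield (p n : nat) : K -> Prop := fun x => exists y : K, x = y ^+ (p ^ n).

Definition perfect_core (p : nat) : K -> Prop := fun x => forall n, powfield p n x.

Definition composite (A B : K -> Prop) : K -> Prop :=
  fun x => forall S, is_subfield S -> subset_of A S -> subset_of B S -> S x.

Definition adjoin (A : K -> Prop) (s : seq K) : K -> Prop :=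
  composite A (fun x => x \in s).

Definition fin_gen_over (k : K -> Prop) : Prop :=
  exists s : seq K, forall x, adjoin k s x.

Definition degree_is (L M : K -> Prop) (n : nat) : Prop :=
  exists b : 'I_n -> K,
    [/\ (forall i, L (b i)),
        (forall c : 'I_n -> K, (forall i, M (c i)) ->
            \sum_(i < n) c i * b i = 0 -> forall i, c i = 0) &
        (forall x, L x -> exists2 c : 'I_n -> K,
            (forall i, M (c i)) & x = \sum_(i < n) c i * b i)].

End Defs.

(* Main.v *)
Require Import Defs.
From HB Require Import structures.
From mathcomp Require Import all_boot all_order all_algebra.
From Stdlib Require Import FunctionalExtensionality PropExtensionality ClassicalEpsilon Classical Lia.
From mathcomp Require Import zify.
Set Implicit Arguments. Unset Strict Implicit. Unset Printing Implicit Defensive.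
Import GRing.Theory.
Local Open Scope ring_scope.



Section Main.
Variable K : fieldType.
Variable p : nat.
Hypothesis Hp : p \in [pchar K].

Lemma pprime : prime p. Proof. exact: pcharf_prime Hp. Qed.
Lemma pgt1 : (1 < p)%N. Proof. exact: prime_gt1 pprime. Qed.
Lemma pgt0 : (0 < p)%N. Proof. exact: prime_gt0 pprime. Qed.

Lemma frobD (x y : K) : (x + y) ^+ p = x ^+ p + y ^+ p.
Proof. by rewrite -!(pFrobenius_autE Hp) rmorphD. Qed.
Lemma frobN (x : K) : (- x) ^+ p = - x ^+ p.
Proof. by rewrite -!(pFrobenius_autE Hp) rmorphN. Qed.
Lemma frobB (x y : K) : (x - y) ^+ p = x ^+ p - y ^+ p.
Proof. by rewrite frobD frobN. Qed.
Lemma frob_sum (I : finType) (F : I -> K) : (\sum_i F i) ^+ p = \sum_i (F i) ^+ p.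
Proof. by rewrite -(pFrobenius_autE Hp) rmorph_sum. Qed.
Lemma frob_inj (x y : K) : x ^+ p = y ^+ p -> x = y.
Proof.
move=> /eqP; rewrite -subr_eq0 -frobB expf_eq0 subr_eq0 => /andP[_ /eqP]//.
Qed.
Lemma frob0 : (0 : K) ^+ p = 0. Proof. by rewrite expr0n gtn_eqF ?pgt0. Qed.

Lemma seteq (A B : K -> Prop) : (forall x, A x <-> B x) -> A = B.
Proof. move=> h; apply: functional_extensionality => x; apply: propositional_extensionality; exact: h. Qed.

Lemma choice_fun (I : Type) (P : I -> K -> Prop) :
  (forall i, exists y, P i y) -> exists f : I -> K, forall i, P i (f i).
Proof.
move=> h; exists (fun i => proj1_sig (constructive_indefinite_description _ (h i))).
by move=> i; case: (constructive_indefinite_description _ _).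
Qed.

Section SF.
Variable F : K -> Prop.
Hypothesis HF : is_subfield F.
Lemma sf0 : F 0. Proof. by case: HF. Qed.
Lemma sf1 : F 1. Proof. by case: HF. Qed.
Lemma sfB x y : F x -> F y -> F (x - y). Proof. by case: HF => _ _ h _ _; apply: h. Qed.
Lemma sfM x y : F x -> F y -> F (x * y). Proof. by case: HF => _ _ _ h _; apply: h. Qed.
Lemma sfN x : F x -> F (- x). Proof. by move=> h; rewrite -sub0r; apply: sfB (sf0) h. Qed.
Lemma sfD x y : F x -> F y -> F (x + y).
Proof. by move=> hx hy; rewrite -[y]opprK; apply: sfB => //; apply: sfN. Qed.
Lemma sfV x : F x -> F x^-1.
Proof. case: HF => _ _ _ _ h hx; case: (eqVneq x 0) => [e|nz]; last exact: h. by rewrite e invr0 -e. Qed.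
Lemma sfX x n : F x -> F (x ^+ n).
Proof. by move=> hx; elim: n => [|n IH]; [rewrite expr0; apply: sf1 | rewrite exprS; apply: sfM]. Qed.
Lemma sf_sum (I : finType) (P : pred I) (f : I -> K) : (forall i, P i -> F (f i)) -> F (\sum_(i | P i) f i).
Proof. move=> h; apply: (big_ind F) => //; [exact: sf0 | exact: sfD]. Qed.
End SF.

Definition img (A : K -> Prop) : K -> Prop := fun y => exists x, A x /\ y = x ^+ p.

Inductive rgen (F T : K -> Prop) : K -> Prop :=
| rgF x : F x -> rgen F T x
| rgT x : T x -> rgen F T x
| rgB x y : rgen F T x -> rgen F T y -> rgen F T (x - y)
| rgM x y : rgen F T x -> rgen F T y -> rgen F T (x * y).

Definition gen (F : K -> Prop) (t : seq K) := rgen F (fun x => x \in t).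

Section Rgen.
Variables F T : K -> Prop.
Hypothesis HF : is_subfield F.
Hypothesis HT : forall x, T x -> F (x ^+ p).

Lemma rgen_pow x : rgen F T x -> F (x ^+ p).
Proof.
elim=> {x} [x hx|x hx|x y _ hx _ hy|x y _ hx _ hy].
- by rewrite -(pFrobenius_autE Hp); apply: sfX.
- exact: HT.
- by rewrite frobB; apply: sfB.
- by rewrite exprMn; apply: sfM.
Qed.

Lemma rgenX x n : rgen F T x -> rgen F T (x ^+ n).
Proof.
move=> hx; elim: n => [|n IH]; first by rewrite expr0; apply: rgF; apply: sf1.
by rewrite exprS; apply: rgM.
Qed.

Lemma rgen_subfield : is_subfield (rgen F T).
Proof.
split.
- by apply: rgF; apply: sf0.
- by apply: rgF; apply: sf1.
- by move=> x y; apply: rgB.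
- by move=> x y; apply: rgM.
- move=> x hx nz.
  have -> : x^-1 = x ^+ p.-1 * (x ^+ p)^-1.
    by rewrite -{2}(prednK pgt0) exprS invfM mulrCA mulfV ?mulr1 // expf_neq0.



  apply: rgM; first exact: rgenX.
  by apply: rgF; apply: sfV => //; apply: rgen_pow.
Qed.

Lemma rgen_min (S : K -> Prop) : is_subfield S -> subset_of F S -> subset_of T S ->
  subset_of (rgen F T) S.
Proof.
move=> HS hF hT x; elim=> {x} [x hx|x hx|x y _ hx _ hy|x y _ hx _ hy].
- exact: hF.
- exact: hT.
- exact: sfB.
- exact: sfM.
Qed.

Lemma composite_rgen : composite F T = rgen F T.
Proof.
apply: seteq => x; split.
- move=> h; apply: h; first exact: rgen_subfield.
  + by move=> y; apply: rgF.
  + by move=> y; apply: rgT.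
- move=> hx S HS hF hT; exact: rgen_min hx.
Qed.
End Rgen.


Definition pow_in (F : K -> Prop) (t : seq K) := forall x, x \in t -> F (x ^+ p).

Section Gen.
Variable F : K -> Prop.
Hypothesis HF : is_subfield F.

Lemma gen_subfield t : pow_in F t -> is_subfield (gen F t).
Proof. by move=> h; apply: rgen_subfield. Qed.
Lemma gen_base t : subset_of F (gen F t). Proof. by move=> x; apply: rgF. Qed.
Lemma gen_mem t x : x \in t -> gen F t x. Proof. by apply: rgT. Qed.
Lemma gen_min t (S : K -> Prop) : is_subfield S -> subset_of F S -> (forall x, x \in t -> S x) ->
  subset_of (gen F t) S.
Proof. by move=> HS h1 h2; apply: rgen_min. Qed.

Lemma gen_nil : gen F [::] = F.
Proof.
apply: seteq => x; split; last exact: gen_base.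
by apply: gen_min => //.
Qed.
End Gen.

Lemma pow_in_cat F t u : pow_in F (t ++ u) <-> pow_in F t /\ pow_in F u.
Proof.
split; first by move=> h; split=> x hx; apply: h; rewrite mem_cat hx ?orbT.
by case=> h1 h2 x; rewrite mem_cat => /orP[]; [apply: h1|apply: h2].
Qed.

Lemma pow_in_mono (F G : K -> Prop) t : subset_of F G -> pow_in F t -> pow_in G t.
Proof. by move=> h1 h2 x hx; apply/h1/h2. Qed.

Lemma gen_cat F t u : is_subfield F -> pow_in F (t ++ u) -> gen F (t ++ u) = gen (gen F t) u.
Proof.
move=> HF /pow_in_cat [ht hu].
have Ht := gen_subfield HF ht.
have hu' : pow_in (gen F t) u := pow_in_mono (@gen_base F t) hu.
have Hu := gen_subfield Ht hu'.
apply: seteq => x; split.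
- apply: gen_min => //; first by move=> y hy; do 2 apply: gen_base.
  move=> y; rewrite mem_cat => /orP[hy|hy]; last exact: gen_mem.
  by apply: gen_base; apply: gen_mem.
- have HG : is_subfield (gen F (t ++ u)) by apply: gen_subfield => //; apply/pow_in_cat.
  apply: gen_min => //; last by move=> y hy; apply: gen_mem; rewrite mem_cat hy orbT.
  apply: gen_min => //; first exact: gen_base.
  by move=> y hy; apply: gen_mem; rewrite mem_cat hy.
Qed.

Lemma gen_mono F G t : is_subfield G -> subset_of F G -> pow_in G t ->
  subset_of (gen F t) (gen G t).
Proof.
move=> HG h hp; apply: rgen_min; first exact: gen_subfield.
- by move=> x hx; apply/gen_base/h.
- by move=> x hx; apply: gen_mem.
Qed.

Lemma gen_rcons F t x : is_subfield F -> pow_in F (rcons t x) ->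
  gen F (rcons t x) = gen (gen F t) [:: x].
Proof. by move=> HF h; rewrite -cats1 gen_cat // cats1. Qed.

Lemma gen_absorb G x : is_subfield G -> G x -> gen G [:: x] = G.
Proof.
move=> HG hx; apply: seteq => y; split; last exact: gen_base.
by apply: gen_min => // z; rewrite inE => /eqP ->.
Qed.

Lemma img_subfield F : is_subfield F -> is_subfield (img F).
Proof.
move=> HF; split.
- by exists 0; split; [apply: sf0 | rewrite frob0].
- by exists 1; split; [apply: sf1 | rewrite expr1n].
- by move=> _ _ [x [hx ->]] [y [hy ->]]; exists (x - y); split; [apply: sfB | rewrite frobB].
- by move=> _ _ [x [hx ->]] [y [hy ->]]; exists (x * y); split; [apply: sfM | rewrite exprMn].
- by move=> _ [x [hx ->]] _; exists x^-1; split; [apply: sfV | rewrite exprVn].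
Qed.

Lemma img_mono A B : subset_of A B -> subset_of (img A) (img B).
Proof. by move=> h _ [x [hx ->]]; exists x; split => //; apply: h. Qed.

Lemma img_gen F t : is_subfield F -> pow_in F t ->
  img (gen F t) = gen (img F) (map (fun x => x ^+ p) t).
Proof.
move=> HF ht.
have H1 : is_subfield (gen F t) := gen_subfield HF ht.
have ht' : pow_in (img F) (map (fun x => x ^+ p) t).
  by move=> _ /mapP [x hx ->]; exists (x ^+ p); split => //; apply: ht.
have H2 := gen_subfield (img_subfield HF) ht'.
apply: seteq => y; split.
- case=> x [hx ->]; elim: hx => {x} [x hx|x hx|x z _ hx _ hz|x z _ hx _ hz].
  + by apply: gen_base; exists x.
  + by apply: gen_mem; apply: map_f.
  + by rewrite frobB; apply: sfB.
  + by rewrite exprMn; apply: sfM.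
- apply: gen_min => //; first exact: img_subfield.
  + by apply: img_mono; apply: gen_base.
  + by move=> _ /mapP [x hx ->]; exists x; split => //; apply: gen_mem.
Qed.


Lemma choice_fun2 (I T : Type) (P : I -> T -> Prop) :
  (forall i, exists y, P i y) -> exists f : I -> T, forall i, P i (f i).
Proof.
move=> h; exists (fun i => proj1_sig (constructive_indefinite_description _ (h i))).
by move=> i; case: (constructive_indefinite_description _ _).
Qed.

Definition basis (L M : K -> Prop) (I : finType) (b : I -> K) :=
  [/\ (forall i, L (b i)),
      (forall c : I -> K, (forall i, M (c i)) -> \sum_i c i * b i = 0 -> forall i, c i = 0) &
      (forall x, L x -> exists2 c : I -> K, (forall i, M (c i)) & x = \sum_i c i * b i)].

Definition deg (L M : K -> Prop) (n : nat) :=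
  exists (I : finType) (b : I -> K), #|I| = n /\ basis L M b.

Lemma sum_enum (I : finType) (f : I -> K) : \sum_i f i = \sum_(j < #|I|) f (enum_val j).
Proof. by rewrite (reindex _ (onW_bij _ (@enum_val_bij I))). Qed.

Lemma deg_degree L M n : deg L M n <-> degree_is L M n.
Proof.
split.
- case=> I [b [<- [h1 h2 h3]]].
  exists (fun j => b (enum_val j)); split.
  + by move=> j; apply: h1.
  + move=> c hc hs j.
    have := h2 (fun i => c (enum_rank i)) (fun i => hc _).
    rewrite sum_enum.
    under eq_bigr do rewrite enum_valK.
    by move=> /(_ hs (enum_val j)); rewrite enum_valK.
  + move=> x /h3 [c hc ->]; exists (fun j => c (enum_val j)) => //.
    by rewrite sum_enum.
- case=> b [h1 h2 h3]; exists 'I_n, b; split; first exact: card_ord.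
  by split.
Qed.

Lemma deg_tower L M N n m : is_subfield L -> is_subfield M -> subset_of N M -> subset_of M L ->
  deg L M n -> deg M N m -> deg L N (n * m).
Proof.
move=> HL HM hNM hML [I [b [cI [b1 b2 b3]]]] [J [e [cJ [e1 e2 e3]]]].
exists (I * J)%type, (fun ij => e ij.2 * b ij.1); split; first by rewrite card_prod cI cJ.
split.
- by move=> [i j]; apply: sfM => //; apply/hML/e1.
- move=> c hc hs [i j].
  have hs' : \sum_i (\sum_j c (i, j) * e j) * b i = 0.
    have -> : \sum_i (\sum_j c (i, j) * e j) * b i = \sum_i \sum_j c (i, j) * (e j * b i).
      by apply: eq_bigr => i' _; rewrite mulr_suml; apply: eq_bigr => j' _; rewrite mulrA.
    apply: (etrans _ hs); rewrite pair_big /=; by apply: eq_big => [[i' j']|[i' j'] _].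
  have := b2 _ _ hs' i.
  have hin : forall i, M (\sum_j c (i, j) * e j).
    move=> i'; apply: sf_sum => // j' _; apply: sfM => //; first by apply/hNM/hc.
  move=> /(_ hin) h0.
  have := e2 (fun j => c (i, j)) (fun j => hc _) h0 j; done.
- move=> x /b3 [y hy ->].
  have [z hz] := @choice_fun2 _ _ (fun i (zi : J -> K) => (forall j, N (zi j)) /\ y i = \sum_j zi j * e j)
     (fun i => let: ex_intro2 zi h1 h2 := e3 _ (hy i) in ex_intro _ zi (conj h1 h2)).
  exists (fun ij => z ij.1 ij.2); first by move=> [i j]; case: (hz i).
  have -> : \sum_(ij : I * J) z ij.1 ij.2 * (e ij.2 * b ij.1) = \sum_i \sum_j z i j * (e j * b i).
    by rewrite pair_big /=; apply: eq_big => [[i' j']|[i' j'] _].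
  apply: eq_bigr => i _; case: (hz i) => _ ->; rewrite mulr_suml.
  by apply: eq_bigr => j _; rewrite mulrA.
Qed.

Lemma deg_img L M n : deg L M n -> deg (img L) (img M) n.
Proof.
case=> I [b [cI [b1 b2 b3]]]; exists I, (fun i => b i ^+ p); split => //; split.
- by move=> i; exists (b i); split.
- move=> c hc hs.
  have [d hd] := @choice_fun2 _ _ (fun i di => M di /\ c i = di ^+ p)
     (fun i => let: ex_intro x (conj h1 h2) := hc i in ex_intro _ x (conj h1 h2)).
  have : \sum_i d i * b i = 0.
    apply: frob_inj; rewrite frob0 frob_sum; apply: (etrans _ hs).
    by apply: eq_bigr => i _; rewrite exprMn; case: (hd i) => _ ->.
  move=> /(b2 d (fun i => proj1 (hd i))) h0 i.
  by case: (hd i) => _ ->; rewrite h0 frob0.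
- move=> _ [x [/b3 [c hc ->] ->]]; exists (fun i => c i ^+ p).
    by move=> i; exists (c i).
  by rewrite frob_sum; apply: eq_bigr => i _; rewrite exprMn.
Qed.


Lemma degree_le (L M : K -> Prop) n m : is_subfield M -> degree_is L M n -> degree_is L M m -> (n <= m)%N.
Proof.
move=> HM [b [b1 b2 b3]] [b' [b'1 b'2 b'3]].
have [Bf hB] := @choice_fun2 _ _ (fun i (f : 'I_m -> K) => (forall j, M (f j)) /\ b i = \sum_j f j * b' j)
   (fun i => let: ex_intro2 f h1 h2 := b'3 _ (b1 i) in ex_intro _ f (conj h1 h2)).
have [Af hA] := @choice_fun2 _ _ (fun j (f : 'I_n -> K) => (forall k, M (f k)) /\ b' j = \sum_k f k * b k)
   (fun j => let: ex_intro2 f h1 h2 := b3 _ (b'1 j) in ex_intro _ f (conj h1 h2)).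
pose Bm : 'M[K]_(n, m) := \matrix_(i, j) Bf i j.
pose Am : 'M[K]_(m, n) := \matrix_(j, k) Af j k.
have E : Bm *m Am = 1%:M.
  apply/matrixP => i k; rewrite !mxE; under eq_bigr do rewrite !mxE.
  pose c := fun k => \sum_j Bf i j * Af j k - (i == k)%:R.
  have hc : forall k, M (c k).
    move=> k'; apply: sfB => //.
      apply: sf_sum => // j _; apply: sfM => //; [exact: (proj1 (hB i)) | exact: (proj1 (hA j))].
    by case: (i == k'); [apply: sf1 | apply: sf0].
  have hs : \sum_k c k * b k = 0.
    rewrite /c.
    under eq_bigr do rewrite mulrBl.
    rewrite sumrB.
    have -> : \sum_k (i == k)%:R * b k = b i.
      rewrite (bigD1 i) //= eqxx mul1r big1 ?addr0 // => k' /negbTE.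
      by rewrite eq_sym => ->; rewrite mul0r.
    apply/eqP; rewrite subr_eq0; apply/eqP.
    rewrite (proj2 (hB i)).
    under [RHS]eq_bigr do rewrite (proj2 (hA _)) mulr_sumr.
    rewrite exchange_big /=; apply: eq_bigr => k' _; rewrite mulr_suml.
    by apply: eq_bigr => j _; rewrite mulrA.
  have := b2 c hc hs k; rewrite /c => /eqP; rewrite subr_eq0 => /eqP ->.
  done.
have := mxrankM_maxr Bm Am; rewrite E mxrank1 => h.
exact: leq_trans h (rank_leq_row Am).
Qed.

Lemma degree_uniq (L M : K -> Prop) n m : is_subfield M -> degree_is L M n -> degree_is L M m -> n = m.
Proof. by move=> HM h1 h2; apply/eqP; rewrite eqn_leq (degree_le HM h1 h2) (degree_le HM h2 h1). Qed.

Lemma deg_uniq (L M : K -> Prop) n m : is_subfield M -> deg L M n -> deg L M m -> n = m.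
Proof. by move=> HM /deg_degree h1 /deg_degree h2; apply: degree_uniq h1 h2. Qed.

End Main.



Section Step.
Variable K : fieldType.
Variable G : K -> Prop.
Hypothesis HG : is_subfield G.

Definition Fco (h : {poly K}) := forall i, G h`_i.

Lemma Fco0 : Fco 0. Proof. by move=> i; rewrite coef0; apply: sf0. Qed.
Lemma FcoB a b : Fco a -> Fco b -> Fco (a - b).
Proof. by move=> ha hb i; rewrite coefB; apply: sfB. Qed.
Lemma FcoD a b : Fco a -> Fco b -> Fco (a + b).
Proof. by move=> ha hb i; rewrite coefD; apply: sfD. Qed.
Lemma FcoM a b : Fco a -> Fco b -> Fco (a * b).
Proof. move=> ha hb i; rewrite coefM; apply: sf_sum => // j _; exact: sfM. Qed.
Lemma FcoC c : G c -> Fco c%:P.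
Proof. by move=> hc i; rewrite coefC; case: (i == 0)%N => //; apply: sf0. Qed.
Lemma FcoZ c a : G c -> Fco a -> Fco (c *: a).
Proof. by move=> hc ha i; rewrite coefZ; apply: sfM. Qed.
Lemma FcoXn n : Fco 'X^n.
Proof. by move=> i; rewrite coefXn; case: (i == n); [apply: sf1 | apply: sf0]. Qed.

Lemma Fco_rec q : Fco q -> forall n k qq r, Fco r -> Fco (Pdiv.CommonRing.redivp_rec q k qq r n).2.
Proof.
move=> hq; elim=> [|n IH] k qq r hr /=.
- case: ifP => _ //=; apply: FcoB; first by apply: FcoM => //; apply: FcoC; exact: hq.
  by apply: FcoM => //; apply: FcoZ; [exact: hr | apply: FcoXn].
- case: ifP => _ //; apply: IH; apply: FcoB; first by apply: FcoM => //; apply: FcoC; exact: hq.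
  by apply: FcoM => //; apply: FcoZ; [exact: hr | apply: FcoXn].
Qed.

Lemma Fco_rmodp a q : Fco q -> Fco a -> Fco (Pdiv.CommonRing.rmodp a q).
Proof.
move=> hq ha; rewrite /Pdiv.CommonRing.rmodp; rewrite /Pdiv.CommonRing.redivp locked_withE /Pdiv.CommonRing.redivp_expanded_def.
case: ifP => _ //=; exact: Fco_rec.
Qed.

Variable p : nat.
Hypothesis Hp : p \in [pchar K].
Variable x : K.
Hypothesis hxp : G (x ^+ p).
Hypothesis hxG : ~ G x.

Lemma XsubC_pow : ('X - x%:P) ^+ p = 'X^p - (x ^+ p)%:P.
Proof.
have Hp' : p \in [pchar {poly K}] by rewrite pchar_poly.
by rewrite -(pFrobenius_autE Hp') rmorphB /= !pFrobenius_autE polyC_exp.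
Qed.

Lemma no_pow_small k : (0 < k < p)%N -> ~ G ((- x) ^+ k).
Proof.
move=> /andP[k0 kp] hk.
set y := - x.
have hyp : G (y ^+ p) by rewrite /y (frobN Hp); apply: sfN.
have yG : ~ G y by move=> hy; apply: hxG; rewrite -[x]opprK; apply: sfN.
have y0 : y != 0 by apply/eqP => e; apply: yG; rewrite e; apply: sf0.
have [a _ ha] := Bezoutl k (pgt0 Hp).
have cp : coprime p k by rewrite prime_coprime ?(pprime Hp) // gtnNdvd.
move: ha; rewrite (eqP cp) => /dvdnP [v hv].
have E : y * y ^+ (a * k) = (y ^+ p) ^+ v by rewrite -exprS -exprM [(p * v)%N]mulnC -hv add1n.
have : G (y * y ^+ (a * k) / y ^+ (a * k)).
  rewrite E; apply: sfM => //; first exact: sfX.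
  by apply: sfV => //; rewrite mulnC exprM; apply: sfX.
rewrite mulfK ?expf_neq0 //.
Qed.

Lemma no_small n (g : {poly K}) : size g = n -> (n <= p)%N -> g != 0 -> Fco g -> g.[x] = 0 -> False.
Proof.
elim/ltn_ind: n g => n IH g sg np nz hg gx.
have lc0 : lead_coef g != 0 by rewrite lead_coef_eq0.
set g1 := (lead_coef g)^-1 *: g.
have mg1 : g1 \is monic by rewrite monicE lead_coefZ mulVf.
have hg1 : Fco g1 by apply: FcoZ => //; apply: sfV => //; exact: hg.
have sg1 : size g1 = n by rewrite size_scale ?invr_eq0.
have g1x : g1.[x] = 0 by rewrite hornerZ gx mulr0.
have g1n0 : g1 != 0 by rewrite -size_poly_eq0 sg1 -sg size_poly_eq0.
set P0 := 'X^p - (x ^+ p)%:P.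
have hP0 : Fco P0 by apply: FcoB; [apply: FcoXn | apply: FcoC].
set r := Pdiv.CommonRing.rmodp P0 g1.
have hr : Fco r by apply: Fco_rmodp.
have sr : (size r < n)%N by rewrite -sg1; apply: Pdiv.CommonRing.ltn_rmodpN0.
have eP := Pdiv.RingMonic.rdivp_eq mg1 P0.
have rx : r.[x] = 0.
  have : P0.[x] = 0 by rewrite /P0 !hornerE subrr.
  by rewrite eP hornerD hornerM g1x mulr0 add0r.
have r0 : r = 0.
  apply/eqP; apply/negPn/negP => rn0.
  exact: (IH _ sr r erefl (leq_trans (ltnW sr) np) rn0 hr rx).
have dv : g1 %| ('X - x%:P) ^+ p.
  by rewrite XsubC_pow -/P0 eP -/r r0 addr0 dvdp_mull.
case/dvdp_exp_XsubCP: dv => k kp.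
rewrite eqp_monic ?monic_exp ?monicXsubC // => /eqP eg1.
have sk : n = k.+1 by rewrite -sg1 eg1 size_exp_XsubC.
have k0 : (0 < k)%N.
  rewrite lt0n; apply/eqP => k0; move: g1x; rewrite eg1 k0 expr0 hornerC => /eqP.
  by rewrite oner_eq0.
have kp' : (k < p)%N by rewrite -ltnS -sk.
apply: (@no_pow_small k); first by rewrite k0 kp'.
have := hg1 0%N; rewrite eg1 -horner_coef0 !hornerE.
done.
Qed.


Lemma indep_pow (c : 'I_p -> K) : (forall i, G (c i)) -> \sum_i c i * x ^+ i = 0 -> forall i, c i = 0.
Proof.
move=> hc hs.
pose E := fun i : nat => if insub i is Some j then c j else 0.
have EE : forall j : 'I_p, E j = c j by move=> j; rewrite /E valK.
pose h := \poly_(i < p) E i.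
have hx : h.[x] = 0 by rewrite horner_poly; apply: (etrans _ hs); apply: eq_bigr => i _; rewrite EE.
have hh : Fco h.
  move=> i; rewrite coef_poly; case: ifP => _; last exact: sf0.
  by rewrite /E; case: insub => [j|]; [apply: hc | apply: sf0].
have h0 : h = 0.
  apply/eqP; apply/negPn/negP => hn0.
  exact: (no_small erefl (size_poly _ _) hn0 hh hx).
move=> i; rewrite -EE; have := congr1 (fun q : {poly K} => q`_i) h0.
by rewrite /= coef_poly coef0 ltn_ord.
Qed.

Definition Sp (y : K) := exists c : nat -> K, (forall i, G (c i)) /\ y = \sum_(i < p) c i * x ^+ i.

Lemma Sp_delta j z : (j < p)%N -> G z -> Sp (z * x ^+ j).
Proof.
move=> jp hz; exists (fun i => if i == j then z else 0); split.
  by move=> i; case: ifP => _ //; apply: sf0.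
rewrite (bigD1 (Ordinal jp)) //= eqxx big1 ?addr0 // => i hi.
by rewrite ifF ?mul0r //; apply: contraNF hi => /eqP e; apply/eqP/val_inj.
Qed.

Lemma Sp0 : Sp 0. Proof. by rewrite -(mul0r (x ^+ 0)); apply: Sp_delta (pgt0 Hp) (sf0 HG). Qed.

Lemma SpB y z : Sp y -> Sp z -> Sp (y - z).
Proof.
move=> [c [hc ->]] [d [hd ->]]; exists (fun i => c i - d i); split; first by move=> i; apply: sfB.
by rewrite -sumrB; apply: eq_bigr => i _; rewrite mulrBl.
Qed.

Lemma SpD y z : Sp y -> Sp z -> Sp (y + z).
Proof.
move=> hy hz; have -> : y + z = y - (0 - z) by rewrite sub0r opprK.
exact: SpB hy (SpB Sp0 hz).
Qed.

Lemma SpZ g y : G g -> Sp y -> Sp (g * y).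
Proof.
move=> hg [c [hc ->]]; exists (fun i => g * c i); split; first by move=> i; apply: sfM.
by rewrite mulr_sumr; apply: eq_bigr => i _; rewrite mulrA.
Qed.

Lemma Sp_sum (I : finType) (f : I -> K) : (forall i, Sp (f i)) -> Sp (\sum_i f i).
Proof. by move=> h; apply: (big_ind Sp) => //; [apply: Sp0 | apply: SpD]. Qed.

Lemma shift_sum n (c : nat -> K) : x * \sum_(i < n.+1) c i * x ^+ i =
  \sum_(i < n.+1) (if (i : nat) == 0%N then c n * x ^+ n.+1 else c i.-1) * x ^+ i.
Proof.
rewrite mulr_sumr big_ord_recr big_ord_recl /= expr0 mulr1 addrC.
congr (_ + _); first by rewrite mulrCA -exprS.
by apply: eq_bigr => i _; rewrite /bump /= add0n mulrCA -exprS.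
Qed.

Lemma SpX y : Sp y -> Sp (x * y).
Proof.
move=> [c [hc ->]].
have pn := prednK (pgt0 Hp).
exists (fun i => if i == 0%N then c p.-1 * x ^+ p else c i.-1); split.
  by move=> [|i] /=; [apply: sfM | apply: hc].
by have := shift_sum p.-1 c; rewrite pn.
Qed.

Lemma SpXn n y : Sp y -> Sp (x ^+ n * y).
Proof. by move=> hy; elim: n => [|n IH]; [rewrite expr0 mul1r | rewrite exprS -mulrA; apply: SpX]. Qed.

Lemma SpM y z : Sp y -> Sp z -> Sp (y * z).
Proof.
move=> hy [c [hc ->]]; rewrite mulr_sumr; apply: Sp_sum => i.
by rewrite mulrCA; apply: SpZ => //; rewrite mulrC; apply: SpXn.
Qed.

Lemma gen_Sp y : gen G [:: x] y -> Sp y.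
Proof.
elim=> {y} [y hy|y hy|y z _ hy _ hz|y z _ hy _ hz].
- by rewrite -[y]mulr1 -(expr0 x); apply: Sp_delta (pgt0 Hp) hy.
- move: hy; rewrite inE => /eqP ->; have -> : x = 1 * x ^+ 1 by rewrite mul1r expr1.
  by apply: Sp_delta (pgt1 Hp) (sf1 HG).
- exact: SpB.
- exact: SpM.
Qed.

Lemma deg_step : deg (gen G [:: x]) G p.
Proof.
have pw : pow_in p G [:: x] by move=> y; rewrite inE => /eqP ->.
exists 'I_p, (fun i : 'I_p => x ^+ i); split; first exact: card_ord.
split.
- by move=> i; apply: (rgenX HG); apply: gen_mem; rewrite inE.
- exact: indep_pow.
- by move=> y /gen_Sp [c [hc ->]]; exists (fun i : 'I_p => c i).
Qed.

End Step.



Section Chain.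
Variable K : fieldType.
Variable p : nat.
Hypothesis Hp : p \in [pchar K].

Inductive chain (F : K -> Prop) : seq K -> Prop :=
| chain_nil : chain F [::]
| chain_rcons t x : chain F t -> ~ gen F t x -> F (x ^+ p) -> chain F (rcons t x).

Lemma pow_in_rcons (F : K -> Prop) t x : pow_in p F (rcons t x) <-> pow_in p F t /\ F (x ^+ p).
Proof.
split.
- by move=> h; split; [move=> y hy; apply: h; rewrite mem_rcons inE hy orbT | apply: h; rewrite mem_rcons inE eqxx].
- by case=> h1 h2 y; rewrite mem_rcons inE => /orP[/eqP ->|hy] //; apply: h1.
Qed.

Lemma chain_pow (F : K -> Prop) t1 : chain F t1 -> pow_in p F t1.
Proof. by elim=> [|t x _ IH _ hx] //; apply/pow_in_rcons. Qed.

Lemma deg_refl (F : K -> Prop) : is_subfield F -> deg F F 1.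
Proof.
move=> HF; exists 'I_1, (fun _ => 1); split; first exact: card_ord.
split.
- by move=> _; apply: sf1.
- by move=> c _; rewrite big_ord1 mulr1 => h i; rewrite ord1.
- by move=> x hx; exists (fun _ => x) => //; rewrite big_ord1 mulr1.
Qed.

Lemma chain_deg (F : K -> Prop) t1 : is_subfield F -> chain F t1 -> deg (gen F t1) F (p ^ size t1).
Proof.
move=> HF; elim=> [|t x ht IH hn hx]; first by rewrite gen_nil // expn0; apply: deg_refl.
have pw := chain_pow (chain_rcons ht hn hx).
have pt := chain_pow ht.
have Ht := gen_subfield Hp HF pt.
rewrite (gen_rcons Hp) // size_rcons expnS.
have Hx : pow_in p (gen F t) [:: x] by move=> y; rewrite inE => /eqP ->; apply: gen_base.
apply: (deg_tower (gen_subfield Hp Ht Hx) Ht (@gen_base _ F t) (@gen_base _ _ _)) => //.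
apply: (deg_step Ht Hp) => //; exact: gen_base.
Qed.

Lemma chain_cat (F : K -> Prop) a c1 : is_subfield F -> chain F a -> chain (gen F a) c1 -> pow_in p F c1 ->
  chain F (a ++ c1).
Proof.
move=> HF ha; elim=> [|c x hc IH hn hx] pc; first by rewrite cats0.
move/pow_in_rcons: pc => [pc px].
rewrite -rcons_cat; apply: chain_rcons; [exact: IH pc | | exact: px].
by rewrite (gen_cat Hp) //; apply/pow_in_cat; split => //; apply: chain_pow.
Qed.

Lemma chain_weaken (F F' : K -> Prop) t1 : is_subfield F -> is_subfield F' -> subset_of F' F ->
  chain F t1 -> pow_in p F' t1 -> chain F' t1.
Proof.
move=> HF HF' sub; elim=> [|t x ht IH hn hx] pt; first exact: chain_nil.
move/pow_in_rcons: pt => [pt px]; apply: chain_rcons; [exact: IH pt | | exact: px].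
move=> h; apply: hn; apply: (gen_mono Hp HF sub (chain_pow ht)) h.
Qed.

Lemma chain_img (F : K -> Prop) t1 : is_subfield F -> chain F t1 -> chain (img p F) (map (fun x => x ^+ p) t1).
Proof.
move=> HF; elim=> [|t x ht IH hn hx]; first exact: chain_nil.
rewrite map_rcons; apply: chain_rcons => //; last by exists (x ^+ p).
rewrite -img_gen //; last exact: chain_pow.
by case=> y [hy /(frob_inj Hp) e]; apply: hn; rewrite e.
Qed.

Lemma greedy (F : K -> Prop) u : is_subfield F -> pow_in p F u ->
  exists d, [/\ chain F d, (size d <= size u)%N & gen F d = gen F u].
Proof.
move=> HF; elim/last_ind: u => [|u x IH] pu; first by exists [::]; split => //; exact: chain_nil.
move/pow_in_rcons: (pu) => [pu' px].
have [d [hd sd gd]] := IH pu'.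
have pd := chain_pow hd.
have Hd := gen_subfield Hp HF pd.
have Ex : gen F (rcons u x) = gen (gen F d) [:: x] by rewrite (gen_rcons Hp) // gd.
case: (classic (gen F d x)) => hx.
- exists d; split => //; first by rewrite size_rcons (leq_trans sd).
  by rewrite Ex gen_absorb.
- exists (rcons d x); split; first exact: chain_rcons.
    by rewrite !size_rcons.
  by rewrite Ex (gen_rcons Hp) //; apply/pow_in_rcons.
Qed.

End Chain.



Section Fin.
Variable K : fieldType.
Variable p : nat.
Hypothesis Hp : p \in [pchar K].

Local Notation P1 := (@powfield K p 1).
Local Notation P2 := (@powfield K p 2).
Local Notation TT := (fun _ : K => True).
Local Notation fr := (fun x : K => x ^+ p).

Lemma composite_subfield (A B : K -> Prop) : is_subfield (composite A B).
Proof.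
split.
- by move=> S HS _ _; apply: sf0.
- by move=> S HS _ _; apply: sf1.
- by move=> x y hx hy S HS hA hB; apply: sfB => //; [apply: hx | apply: hy].
- by move=> x y hx hy S HS hA hB; apply: sfM => //; [apply: hx | apply: hy].
- move=> x hx nz S HS hA hB; case: (HS) => _ _ _ _ h; apply: h; [exact: hx | exact: nz].
Qed.

Lemma TT_subfield : is_subfield TT. Proof. by split. Qed.

Lemma P1E : P1 = img p TT.
Proof. by apply: seteq => x; split; [case=> y ->; exists y; rewrite expn1 | case=> y [_ ->]; exists y; rewrite expn1]. Qed.

Lemma P2E : P2 = img p P1.
Proof.
apply: seteq => x; split.
- by case=> y ->; exists (y ^+ p); split; [exists y; rewrite expn1 | rewrite -exprM expnS expn1].
- by case=> _ [[y ->] ->]; exists y; rewrite expn1 -exprM expnS expn1.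
Qed.

Lemma HP1 : is_subfield P1. Proof. rewrite P1E; apply: (img_subfield Hp); exact: TT_subfield. Qed.
Lemma HP2 : is_subfield P2. Proof. rewrite P2E; apply: (img_subfield Hp); exact: HP1. Qed.
Lemma P2P1 : subset_of P2 P1. Proof. by rewrite P2E => _ [y [_ ->]]; exists y; rewrite expn1. Qed.
Lemma powP1 (t : seq K) : pow_in p P1 t. Proof. by move=> y _; exists y; rewrite expn1. Qed.
Lemma powP2 (t : seq K) : pow_in p P2 (map fr t).
Proof. by move=> _ /mapP [y _ ->]; exists y; rewrite -exprM expnS expn1. Qed.

Lemma gen_all (F : K -> Prop) t : (forall x, gen F t x) -> gen F t = TT.
Proof. by move=> h; apply: seteq. Qed.

Variable W1 : K -> Prop.
Hypothesis HW1 : is_subfield W1.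
Hypothesis hW1 : subset_of P1 W1.
Variable s : seq K.
Hypothesis hs : gen P1 s = TT.

Lemma bound a : chain p P1 a -> (size a <= size s)%N.
Proof.
move=> ha.
have [d0 [hd0 sd0 gd0]] := greedy Hp HP1 (@powP1 s).
have pa := chain_pow ha.
have Ha := gen_subfield Hp HP1 pa.
have [d [hd _ gd]] := greedy Hp Ha (pow_in_mono (@gen_base _ P1 a) (@powP1 s)).
have hc : chain p P1 (a ++ d) := chain_cat Hp HP1 ha hd (@powP1 d).
have g1 : gen P1 (a ++ d) = TT.
  apply: gen_all => x; rewrite (gen_cat Hp HP1 (@powP1 _)) gd.
  apply: (gen_mono Hp Ha (@gen_base _ P1 a) (pow_in_mono (@gen_base _ P1 a) (@powP1 s))).
  by rewrite hs.
have D1 := chain_deg Hp HP1 hc; rewrite g1 in D1.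
have D0 := chain_deg Hp HP1 hd0; rewrite gd0 hs in D0.
have := deg_uniq HP1 D1 D0; move/eqP; rewrite eqn_exp2l ?(pgt1 Hp) // size_cat => /eqP e.
by apply: leq_trans sd0; rewrite -e leq_addr.
Qed.

Lemma max_chain : exists a, [/\ chain p P1 a, (forall x, x \in a -> W1 x) & gen P1 a = W1].
Proof.
suff H : forall n, (exists a, [/\ chain p P1 a, (forall x, x \in a -> W1 x) & forall w, W1 w -> gen P1 a w])
    \/ (exists a, [/\ chain p P1 a, (forall x, x \in a -> W1 x) & size a = n]).
  case: (H (size s).+1) => [[a [ha aW h]]|[a [ha _ sa]]]; last first.
    by have := bound ha; rewrite sa ltnn.
  exists a; split => //; apply: seteq => x; split; last exact: h.
  by apply: gen_min => //.
elim=> [|n [L|[a [ha aW sa]]]]; first by right; exists [::]; split => //; exact: chain_nil.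
- by left.
- case: (classic (forall w, W1 w -> gen P1 a w)) => [h|h]; first by left; exists a.
  right; have [w hw] := not_all_ex_not _ _ h.
  have [w1 nw] := imply_to_and _ _ hw.
  exists (rcons a w); split.
  + apply: chain_rcons => //; exists w; rewrite expn1 //.
  + by move=> x; rewrite mem_rcons inE => /orP[/eqP ->|/aW].
  + by rewrite size_rcons sa.
Qed.


Lemma main_exists : exists W2 : K -> Prop,
    [/\ is_subfield W2, subset_of W2 W1, subset_of P2 W2,
        same_set (composite W2 P1) W1 &
        (forall n : nat, degree_is W1 W2 n <-> degree_is TT W1 n)].
Proof.
have [a [ha aW ga]] := max_chain.
have [c [hc _ gc]] := greedy Hp HW1 (pow_in_mono hW1 (@powP1 s)).
have gcT : gen W1 c = TT.
  apply: gen_all => x; rewrite gc.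
  apply: (gen_mono Hp HW1 hW1 (pow_in_mono hW1 (@powP1 s))); by rewrite hs.
have DK := chain_deg Hp HW1 hc; rewrite gcT in DK.
have hac : chain p P1 (a ++ c) by apply: (chain_cat Hp HP1 ha _ (@powP1 c)); rewrite ga.
have gac : gen P1 (a ++ c) = TT by rewrite (gen_cat Hp HP1 (@powP1 _)) ga gcT.
have DA1 := chain_deg Hp HP1 hac; rewrite gac in DA1.
have DA2 := deg_img Hp DA1; rewrite -P1E -P2E in DA2.
have hfa := chain_img Hp HP1 ha; rewrite -P2E in hfa.
set fa := map fr a in hfa.
set G1 := gen P2 fa.
have HG1 : is_subfield G1 := gen_subfield Hp HP2 (@powP2 a).
have DG1 := chain_deg Hp HP2 hfa; rewrite -/G1 size_map in DG1.
have G1P1 : subset_of G1 P1.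
  apply: gen_min => //; first exact: HP1; first exact: P2P1.
  by move=> _ /mapP [z _ ->]; exists z; rewrite expn1.
have pwa : pow_in p G1 a by move=> y hy; apply: gen_mem; apply: map_f.
have hca := chain_weaken Hp HP1 HG1 G1P1 ha pwa.
set W2 := gen G1 a.
have HW2 : is_subfield W2 := gen_subfield Hp HG1 pwa.
have DW2 := chain_deg Hp HG1 hca; rewrite -/W2 in DW2.
have G1W1 : subset_of G1 W1 by move=> y h; apply/hW1/G1P1.
have W2W1 : subset_of W2 W1 by apply: gen_min.
have G1W2 : subset_of G1 W2 by apply: gen_base.
have P2W2 : subset_of P2 W2 by move=> y h; apply/G1W2/gen_base.
set fc := map fr c.
have pwc : pow_in p W2 fc by move=> y hy; apply: P2W2; apply: (@powP2 c).
have HW1' := gen_subfield Hp HW2 pwc.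
have EW1 : gen W2 fc = W1.
  apply: seteq => x; split.
  - by apply: gen_min => // _ /mapP [z _ ->]; apply: hW1; exists z; rewrite expn1.
  - rewrite -ga; apply: gen_min => //; last by move=> y hy; apply: gen_base; apply: gen_mem.
    move=> y hy.
    have : img p TT y by rewrite -P1E.
    rewrite -gac (img_gen Hp HP1 (@powP1 _)) -P2E.
    apply: gen_min => //; first by move=> z hz; apply/gen_base/P2W2.
    move=> z; rewrite map_cat mem_cat => /orP [hz|hz]; last exact: gen_mem.
    by apply/gen_base/G1W2; apply: gen_mem.
have [d [hd _ gd]] := greedy Hp HW2 pwc.
have DM := chain_deg Hp HW2 hd; rewrite gd EW1 in DM.
have T1 := deg_tower TT_subfield HP1 P2P1 (fun _ _ => I) DA1 DA2.
have T2 := deg_tower HW1 HW2 G1W2 W2W1 DM DW2.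
have T3 := deg_tower HW1 HG1 (@gen_base _ P2 fa) G1W1 T2 DG1.
have T4 := deg_tower TT_subfield HW1 (fun y h => hW1 (P2P1 h)) (fun _ _ => I) DK T3.
have := deg_uniq HP2 T1 T4; rewrite -!expnD => /eqP; rewrite eqn_exp2l ?(pgt1 Hp) // size_cat => /eqP e.
have em : size d = size c by lia.
rewrite em in DM.
exists W2; split => //.
- move=> x; split; first by move=> h; apply: h.
  rewrite -ga => hx; apply: (gen_min (composite_subfield W2 P1) _ _ hx).
  + by move=> y hy S HS hA hB; apply: hB.
  + by move=> y hy S HS hA hB; apply: hA; apply: gen_mem.
- move=> n; split => /deg_degree h; apply/deg_degree.
  + by rewrite (deg_uniq HW2 h DM).
  + by rewrite (deg_uniq HW1 h DK).
Qed.

End Fin.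

Theorem mainTheorem13 (K : fieldType) (p : nat) (W1 : K -> Prop) :
  p \in [pchar K] ->
  fin_gen_over (@perfect_core K p) ->
  is_subfield W1 ->
  subset_of (@powfield K p 1) W1 ->
  exists W2 : K -> Prop,
    [/\ is_subfield W2,
        subset_of W2 W1,
        subset_of (powfield p 2) W2,
        same_set (composite W2 (powfield p 1)) W1 &
        (forall n : nat, degree_is W1 W2 n <-> degree_is (fun _ : K => True) W1 n)].
Proof.
move=> Hp [s hs] HW1 hW1.
have hs' : gen (@powfield K p 1) s = (fun _ => True).
  apply: gen_all => x; apply: (hs x).
  - exact: (gen_subfield Hp (HP1 Hp) (@powP1 K p s)).
  - by move=> y hy; apply: gen_base; exact: hy 1%N.
  - by move=> y hy; apply: gen_mem.
exact: (main_exists Hp HW1 hW1 hs').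
Qed.
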